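(* Let $\rho_1,\rho_2,k_1,k_2,L>0$ and $0<\alpha<1$, take $\eta=0$, and let $\mathcal{A}$ be the operator on $\mathcal{H}$ described in the context. Then $\mathcal{A}$ is not invertible; consequently $0\in\sigma(\mathcal{A})$.
   Context: Set $\mu(\xi)=|\xi|^{(2\alpha-1)/2}$ for $\xi\in\mathbb{R}$ and $\mathfrak{C}=\pi^{-1}\sin(\alpha\pi)$. All function spaces are complex. Let $\mathbb{H}^1_0=\{(u,v)\in H^1(-L,0)\times H^1(0,L):\ u(-L)=v(L)=0,\ u(0)=v(0)\}$, $\mathbb{L}^2=L^2(-L,0)\times L^2(0,L)$, and $\mathcal{H}=\mathbb{H}^1_0\times\mathbb{L}^2\times L^2(\mathbb{R};\mathbb{L}^2)$, whose elements are written $\mathbb{U}=(u,v,U,V,\varphi_1,\varphi_2)$ with $(u,v)\in\mathbb{H}^1_0$, $(U,V)\in\mathbb{L}^2$, $\varphi_1\in L^2(\mathbb{R};L^2(-L,0))$, $\varphi_2\in L^2(\mathbb{R};L^2(0,L))$ (functions of $(x,\xi)$). $\mathcal{H}$ is a Hilbert space with inner product $\langle\mathbb{U},\tilde{\mathbb{U}}\rangle_{\mathcal H}=\rho_1\int_{-L}^0U\overline{\tilde U}dx+\rho_2\int_0^LV\overline{\tilde V}dx+k_1\int_{-L}^0u_x\overline{\tilde u_x}dx+k_2\int_0^Lv_x\overline{\tilde v_x}dx+\mathfrak{C}\int_{\mathbb R}\int_{-L}^0\varphi_1\overline{\tilde\varphi_1}\,dx\,d\xi+\mathfrak{C}\int_{\mathbb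 R}\int_0^L\varphi_2\overline{\tilde\varphi_2}\,dx\,d\xi$. The domain $\mathcal{D}(\mathcal{A})$ is the set of $\mathbb{U}=(u,v,U,V,\varphi_1,\varphi_2)\in\mathcal{H}$ such that $(U,V)\in\mathbb{H}^1_0$, $u\in H^2(-L,0)$, $v\in H^2(0,L)$, $k_1u_x(0)=k_2v_x(0)$, $|\xi|\varphi_1\in L^2(\mathbb{R};L^2(-L,0))$, $-(|\xi|^2+\eta)\varphi_1+\mu(\xi)U\in L^2(\mathbb{R};L^2(-L,0))$, $|\xi|\varphi_2\in L^2(\mathbb{R};L^2(0,L))$, $-(|\xi|^2+\eta)\varphi_2+\mu(\xi)V\in L^2(\mathbb{R};L^2(0,L))$; and $$\mathcal{A}\mathbb{U}=\Big(U,\ V,\ \tfrac{1}{\rho_1}\big[k_1u_{xx}-\mathfrak{C}\textstyle\int_{\mathbb R}\mu(\xi)\varphi_1(\cdot,\xi)d\xi\big],\ \tfrac{1}{\rho_2}\big[k_2v_{xx}-\mathfrak{C}\textstyle\int_{\mathbb R}\mu(\xi)\varphi_2(\cdot,\xi)d\xi\big],\ -(|\xi|^2+\eta)\varphi_1+\mu(\xi)U,\ -(|\xi|^2+\eta)\varphi_2+\mu(\xi)V\Big).$$ *)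

(* Defs.v *)
From HB Require Import structures.
From mathcomp Require Import all_boot all_order all_algebra.
From mathcomp Require Import all_classical all_reals all_analysis.
From mathcomp Require Import complex.
Set Implicit Arguments. Unset Strict Implicit. Unset Printing Implicit Defensive.
Import Order.TTheory GRing.Theory Num.Theory.
Local Open Scope classical_set_scope.
Local Open Scope ring_scope.

Section Defs.
Variable R : realType.
Local Notation C := R[i].
Local Notation leb := (@lebesgue_measure R).

Definition cnorm2 (z : C) : R := complex.Re z ^+ 2 + complex.Im z ^+ 2.

Definition cint (D : set R) (f : R -> C) : C :=
  (Rintegral leb D (fun x => complex.Re (f x)) +i* Rintegral leb D (fun x => complex.Im (f x)))%C.

Definition L2 (D : set R) (f : R -> C) : Prop :=
  measurable_fun D (fun x => complex.Re (f x)) /\ measurable_fun D (fun x => complex.Im (f x)) /\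
  (\int[leb]_(x in D) (cnorm2 (f x))%:E < +oo)%E.

(* phi : (x, xi) |-> phi x xi belongs to L^2(R; L^2(D)) = L^2(D x R) *)
Definition L2xR (D : set R) (phi : R -> R -> C) : Prop :=
  measurable_fun (D `*` setT) (fun z : R * R => complex.Re (phi z.1 z.2)) /\
  measurable_fun (D `*` setT) (fun z : R * R => complex.Im (phi z.1 z.2)) /\
  (\int[(leb \x leb)%E]_(z in D `*` setT) (cnorm2 (phi z.1 z.2))%:E < +oo)%E.

Definition ae_eq (D : set R) (f g : R -> C) : Prop :=
  {ae leb, forall x, D x -> f x = g x}.

Definition ae_eqxR (D : set R) (phi psi : R -> R -> C) : Prop :=
  {ae (leb \x leb)%E, forall z : R * R, D z.1 -> phi z.1 z.2 = psi z.1 z.2}.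

(* g in L^2(a,b) is the weak derivative of f on [a,b]; f is taken to be the
   absolutely continuous representative: f x = f a + int_a^x g *)
Definition isderiv (a b : R) (f g : R -> C) : Prop :=
  L2 `[a, b] g /\
  forall x, a <= x <= b -> f x = f a + cint `[a, x] g.

Definition H1 (a b : R) (f : R -> C) : Prop := exists g, isderiv a b f g.

Record state := State {
  su : R -> C; sv : R -> C; sU : R -> C; sV : R -> C;
  sp1 : R -> R -> C; sp2 : R -> R -> C }.

Definition inH10 (L : R) (u v : R -> C) : Prop :=
  H1 (- L) 0 u /\ H1 0 L v /\ u (- L) = 0 /\ v L = 0 /\ u 0 = v 0.

Definition inH (L : R) (s : state) : Prop :=
  inH10 L (su s) (sv s) /\ L2 `[- L, 0] (sU s) /\ L2 `[0, L] (sV s) /\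
  L2xR `[- L, 0] (sp1 s) /\ L2xR `[0, L] (sp2 s).

Definition H_eq (L : R) (s t : state) : Prop :=
  ae_eq `[- L, 0] (su s) (su t) /\ ae_eq `[0, L] (sv s) (sv t) /\
  ae_eq `[- L, 0] (sU s) (sU t) /\ ae_eq `[0, L] (sV s) (sV t) /\
  ae_eqxR `[- L, 0] (sp1 s) (sp1 t) /\ ae_eqxR `[0, L] (sp2 s) (sp2 t).

Definition mu (alpha xi : R) : R := `|xi| `^ ((2 * alpha - 1) / 2).
Definition Cst (alpha : R) : R := sin (alpha * pi) / pi.

Definition memeq (alpha eta : R) (phi : R -> R -> C) (W : R -> C) :=
  fun x xi => - ((`|xi| ^+ 2 + eta)%:C * phi x xi)%C + ((mu alpha xi)%:C * W x)%C.

(* s in D(A) and A s = F (in \mathcal H).  u1,u2 (resp. v1,v2) are the first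
   and second (weak) derivatives of u (resp. v). *)
Definition A_maps (rho1 rho2 k1 k2 L alpha eta : R) (s F : state) : Prop :=
  inH L s /\ inH10 L (sU s) (sV s) /\
  exists u1 u2 v1 v2 : R -> C,
    isderiv (- L) 0 (su s) u1 /\ isderiv (- L) 0 u1 u2 /\
    isderiv 0 L (sv s) v1 /\ isderiv 0 L v1 v2 /\
    (k1%:C * u1 0 = k2%:C * v1 0)%C /\
    L2xR `[- L, 0] (fun x xi => (`|xi|%:C * sp1 s x xi)%C) /\
    L2xR `[- L, 0] (memeq alpha eta (sp1 s) (sU s)) /\
    L2xR `[0, L] (fun x xi => (`|xi|%:C * sp2 s x xi)%C) /\
    L2xR `[0, L] (memeq alpha eta (sp2 s) (sV s)) /\
    ae_eq `[- L, 0] (sU s) (su F) /\ ae_eq `[0, L] (sV s) (sv F) /\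
    ae_eq `[- L, 0]
      (fun x => (rho1^-1)%:C * (k1%:C * u2 x
                 - (Cst alpha)%:C * cint setT (fun xi => (mu alpha xi)%:C * sp1 s x xi)))%C
      (sU F) /\
    ae_eq `[0, L]
      (fun x => (rho2^-1)%:C * (k2%:C * v2 x
                 - (Cst alpha)%:C * cint setT (fun xi => (mu alpha xi)%:C * sp2 s x xi)))%C
      (sV F) /\
    ae_eqxR `[- L, 0] (memeq alpha eta (sp1 s) (sU s)) (sp1 F) /\
    ae_eqxR `[0, L] (memeq alpha eta (sp2 s) (sV s)) (sp2 F).

Definition A_invertible (rho1 rho2 k1 k2 L alpha eta : R) : Prop :=
  (forall F, inH L F -> exists s, A_maps rho1 rho2 k1 k2 L alpha eta s F) /\
  (forall s t F, A_maps rho1 rho2 k1 k2 L alpha eta s F ->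
                 A_maps rho1 rho2 k1 k2 L alpha eta t F -> H_eq L s t).

End Defs.

(* Main.v *)
Require Import Defs.
From HB Require Import structures.
From mathcomp Require Import all_boot all_order all_algebra.
From mathcomp Require Import all_classical all_reals all_analysis.
From mathcomp Require Import complex.
From mathcomp Require Import ring lra.
From mathcomp Require Import measurable_realfun.
Import Order.TTheory GRing.Theory Num.Theory.
Local Open Scope ring_scope.
Local Open Scope classical_set_scope.
Section S.
Variable R : realType.
Local Notation leb := (@lebesgue_measure R).
Local Notation C := R[i].

Lemma cnorm2_real (x : R) : cnorm2 (x%:C)%C = x ^+ 2.
Proof. by rewrite /cnorm2 /= expr0n addr0. Qed.

Lemma cnorm2_0 : cnorm2 (0 : C) = 0.
Proof. by rewrite /cnorm2 /= expr0n addr0. Qed.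

Lemma cint0 (D : set R) : cint D (fun _ => 0) = 0.
Proof.
rewrite /cint /Rintegral /=.
have -> : (\int[leb]_(x in D) (0:R)%:E)%E = 0%E by exact: integral0.
by [].
Qed.

Lemma L2_0 (D : set R) : L2 D (fun _ => 0).
Proof.
split; first exact: measurable_cst.
split; first exact: measurable_cst.
rewrite cnorm2_0.
have -> : (\int[leb]_(x in D) (0:R)%:E)%E = 0%E by exact: integral0.
exact: ltry.
Qed.

Lemma H1_0 (a b : R) : H1 a b (fun _ => 0).
Proof.
exists (fun _ => 0); split; first exact: L2_0.
by move=> x _; rewrite cint0 addr0.
Qed.

Lemma L2xR_0 (D : set R) : L2xR D (fun _ _ => 0).
Proof.
split; first exact: measurable_cst.
split; first exact: measurable_cst.
rewrite cnorm2_0.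
have -> : (\int[(leb \x leb)%E]_(x in D `*` setT) (0:R)%:E)%E = 0%E by exact: integral0.
exact: ltry.
Qed.

Definition f0 : R -> R -> C := fun x xi => ((\1_(`]0, 1]) xi : R)%:C)%C.

Lemma L2xR_f0 (L : R) : 0 < L -> L2xR `[- L, 0] f0.
Proof.
move=> L0.
split.
  apply: measurable_funTS => /=.
  exact: (@measurableT_comp _ _ _ _ _ _ (\1_(`]0, 1]) : R -> R) _ snd (@measurable_realfun.measurable_indic _ R R setT (`]0, 1] : set R) (measurable_itv _)) measurable_snd).
split; first exact: measurable_cst.
set D2 := (X in (\int[_]_(z in X) _)%E).
set g := (X in (\int[_]_(z in _) X z)%E).
set P := (leb \x leb)%E.
have mD2 : measurable D2 by exact: measurableX.
have Hle : (\int[P]_(x in D2) g x <= \int[P]_(x in D2) (\1_(`[- L, 0] `*` `]0, 1]) x)%:E)%E.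
  apply: ge0_le_integral => //.
  - by move=> z _; rewrite lee_fin /g /cnorm2 /= addr_ge0 // sqr_ge0.
  - apply/measurable_realfun.measurable_EFinP; rewrite /cnorm2 /f0 /=.
    apply: measurable_realfun.measurable_funD; apply: measurable_realfun.measurable_funX; last exact: measurable_cst.
    apply: measurable_funTS.
    exact: (@measurableT_comp _ _ _ _ _ _ (\1_(`]0, 1]) : R -> R) _ snd (@measurable_realfun.measurable_indic _ R R setT (`]0, 1] : set R) (measurable_itv _)) measurable_snd).
  - apply/measurable_realfun.measurable_EFinP; apply: measurable_funTS.
    apply: (@measurable_realfun.measurable_indic _ _ R setT).
    exact: measurableX.
  - move=> z [Dz _]; rewrite /g cnorm2_real !indicE lee_fin.
    rewrite in_setX (mem_set Dz) /=.
    by case: (z.2 \in _) => /=; rewrite ?expr1n ?expr0n.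
apply: le_lt_trans Hle _.
rewrite integral_indic //; last exact: measurableX.
have -> : (`[- L, 0] `*` `]0, 1]) `&` D2 = `[- L, 0] `*` `]0, 1].
  by apply/seteqP; split => z /=; [move=> [[h1 h2] _]|move=> [h1 h2]].
set lhs := (X in (X < _)%E).
have -> : lhs = (leb `[(- L)%R, 0%R] * leb `]0%R, 1%R])%E by exact: product_measure1E.
rewrite !lebesgue_measure_itv /=.
by case: ifP => _; case: ifP => _; rewrite ?mule0 ?mul0e -?EFinD -?EFinM ?ltry.
Qed.

Lemma ae_lift (D : set R) (P : R -> Prop) :
  {ae leb, forall x, D x -> P x} ->
  {ae (leb \x leb)%E, forall z : R * R, D z.1 -> P z.1}.
Proof.
case=> N [mN N0 sub]; exists (N `*` setT); split.
- exact: measurableX.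
- transitivity (leb N * leb setT)%E; first exact: product_measure1E.
  by rewrite N0 mul0e.
- move=> z /= nz; split => //; apply: sub => /= H; apply: nz => Dz; exact: H.
Qed.

Lemma pointwise (alpha t r : R) (p u : C) :
  0 < t -> t <= r -> r <= 1 -> u = 0 ->
  memeq alpha 0 (fun _ _ => p) (fun _ => u) 0 t = f0 0 t ->
  (r ^+ 2)^-1 <= cnorm2 ((`|t|%:C * p)%C).
Proof.
move=> t0 tr r1 -> h.
rewrite /memeq /f0 indicE mem_set /= in h; last first.
  by rewrite in_itv /= t0 /= (le_trans tr r1).
rewrite mulr0 addr0 addr0 in h.
have tn : ((`|t| ^+ 2)%:C)%C != 0 :> C.
  apply/eqP => /(congr1 (@complex.Re R)) /= /eqP.
  by rewrite expf_eq0 normr_eq0 (gt_eqF t0) andbF.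
have hp : p = ((- (`|t| ^+ 2)^-1)%:C)%C.
  apply: (mulfI tn).
  rewrite -rmorphM mulrN mulfV; last by rewrite expf_eq0 normr_eq0 (gt_eqF t0) andbF.
  by rewrite rmorphN; apply: oppr_inj; rewrite opprK h.
rewrite hp -rmorphM cnorm2_real gtr0_norm //.
have -> : (t * - (t^+2)^-1)^+2 = (t^+2)^-1 by field; rewrite gt_eqF.
rewrite lef_pV2 ?posrE ?exprn_gt0 //; last exact: lt_le_trans tr.
nra.
Qed.

Lemma core (L alpha : R) (phi : R -> R -> C) (U : R -> C) :
  0 < L ->
  L2xR `[- L, 0] (fun x xi => (`|xi|%:C * phi x xi)%C) ->
  Defs.ae_eq `[- L, 0] U (fun _ => 0) ->
  ae_eqxR `[- L, 0] (memeq alpha 0 phi U) f0 -> False.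
Proof.
move=> L0 [mRe [mIm Hfin]] HU Hmem.
set D2 := (X in (\int[_]_(z in X) _)%E) in Hfin.
set g := (X in (\int[_]_(z in _) X z)%E) in Hfin.
set P := (leb \x leb)%E in Hfin.
have mD2 : measurable D2 by exact: measurableX.
set Int := (X in (X < _)%E) in Hfin.
have g0 : forall z, D2 z -> (0 <= g z)%E.
  by move=> z _; rewrite lee_fin /cnorm2 addr_ge0 // sqr_ge0.
have Ige0 : (0 <= Int)%E by apply: integral_ge0.
have Ifin : Int = (fine Int)%:E by rewrite fineK // ge0_fin_numE.
set I := fine Int.
have I0 : 0 <= I by rewrite fine_ge0.
set r := L / (I + 1 + L).
have r0 : 0 < r by rewrite divr_gt0 //; lra.
have r1 : r <= 1 by rewrite ler_pdivrMr ?mul1r; lra.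
set E := `[- L, 0] `*` `]0, r].
pose T2 := (measurableTypeR R * measurableTypeR R)%type.
have mE : measurable (E : set T2) by exact: measurableX.
have Hle : (\int[P]_(z in D2) (((r ^+ 2)^-1)%:E * (\1_E z)%:E) <= Int)%E.
  apply: ae_ge0_le_integral => //.
  - move=> z _; apply: mule_ge0; rewrite lee_fin.
      by rewrite invr_ge0 exprn_ge0 // ltW.
    by rewrite indicE ler0n.
  - have mi : measurable_fun D2 (fun z : T2 => ((\1_E z : R)%:E : \bar R)).
      apply/measurable_realfun.measurable_EFinP.
      exact: (@measurable_realfun.measurable_indic _ T2 R D2 E mE).
    exact: (measurable_funeM _ mi).
  - apply/measurable_realfun.measurable_EFinP; rewrite /cnorm2.
    by apply: measurable_realfun.measurable_funD; apply: measurable_realfun.measurable_funX.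
  - have FF := @ae_filter_ringOfSetsType _ _ _ (leb \x leb)%E.
    apply: (@filterS2 _ _ FF _ _ _ _ (@ae_lift _ _ HU) Hmem) => z h1 h2 Dz.
    have Dz1 : `[- L, 0] z.1 by case: Dz.
    rewrite indicE; case: (boolP (z \in E)) => zE.
      rewrite mule1 lee_fin.
      move: zE; rewrite inE => -[_ /=]; rewrite in_itv /= => /andP [t0 tr].
      exact: (@pointwise alpha z.2 r (phi z.1 z.2) (U z.1) t0 tr r1 (h1 Dz1) (h2 Dz1)).
    by rewrite mule0; apply: g0.
have mi : measurable_fun D2 (fun z : T2 => ((\1_E z : R)%:E : \bar R)).
  apply/measurable_realfun.measurable_EFinP.
  exact: (@measurable_realfun.measurable_indic _ T2 R D2 E mE).
rewrite ge0_integralZl in Hle; first last.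
- by rewrite lee_fin invr_ge0 exprn_ge0 // ltW.
- by move=> z _; rewrite lee_fin indicE ler0n.
- exact: mi.
- exact: mD2.
rewrite integral_indic // in Hle.
have EE : E `&` D2 = E.
  by apply/seteqP; split => z /=; [move=> [[h1 h2] _]|move=> [h1 h2]].
rewrite EE in Hle.
set m := (X in (_ * X <= _)%E) in Hle.
have mE' : m = (leb `[(- L)%R, 0%R] * leb `]0%R, r])%E by exact: product_measure1E.
rewrite mE' !lebesgue_measure_itv /= in Hle.
move: Hle; rewrite lte_fin oppr_lt0 L0 lte_fin r0 Ifin /= -!EFinD -!EFinM lee_fin.
rewrite sub0r opprK subr0.
have -> : r ^- 2 * (L * r) = I + 1 + L.
  rewrite /r; field.
  by apply/andP; split; apply/eqP; lra.
rewrite -/I; lra.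
Qed.
End S.

Theorem proposition4p4 (R : realType) (rho1 rho2 k1 k2 L alpha : R) :
  0 < rho1 -> 0 < rho2 -> 0 < k1 -> 0 < k2 -> 0 < L ->
  0 < alpha -> alpha < 1 ->
  ~ A_invertible rho1 rho2 k1 k2 L alpha 0.
Proof.
move=> r1 r2 k1p k2p Lp a0 a1 [surj _].
pose z : R -> R[i] := fun _ => 0.
pose F := State z z z z (@f0 R) (fun _ _ => 0).
have HF : inH L F.
  split; first by split; [exact: H1_0|split; [exact: H1_0|]].
  split; first exact: L2_0.
  split; first exact: L2_0.
  split; first exact: L2xR_f0.
  exact: L2xR_0.
have [s Hs] := surj F HF.
case: Hs => _ [_ [u1 [u2 [v1 [v2 [_ [_ [_ [_ [_ [Hphi [_ [_ [_ [HU [_ [_ [_ [Hmem _]]]]]]]]]]]]]]]]]]].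
exact: (@core R L alpha (sp1 s) (sU s) Lp Hphi HU Hmem).
Qed.
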